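(* Let $G=(V,E)$ be a claw-free graph, let $v\in V$ and let $k$ be a positive integer. There exists an independent dominating set of $G$ of size at most $k$ containing $v$ if and only if there exists an independent dominating set of size at most $k-1$ in the induced subgraph $G[V\setminus N[v]]$.
   Context: Graphs are finite, simple, undirected; a graph is claw-free if it has no induced $K_{1,3}$. $N[v]$ is the closed neighbourhood of $v$. An independent dominating set is a set $S$ of pairwise non-adjacent vertices such that every vertex outside $S$ has a neighbour in $S$. *)

(* Defs.v *)
From mathcomp Require Import all_boot.
Set Implicit Arguments. Unset Strict Implicit. Unset Printing Implicit Defensive.

Definition simple_graph (T : finType) (e : rel T) : Prop :=
  symmetric e /\ irreflexive e.

Definition claw_free (T : finType) (e : rel T) : Prop :=
  forall x a b c : T,
    e x a -> e x b -> e x c ->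
    a != b -> a != c -> b != c ->
    ~~ e a b -> ~~ e a c -> ~~ e b c -> False.

Definition closed_nbhd (T : finType) (e : rel T) (v : T) : {set T} :=
  [set u | (u == v) || e v u].

Definition ids_in (T : finType) (e : rel T) (W S : {set T}) : Prop :=
  S \subset W /\
  (forall x y, x \in S -> y \in S -> ~~ e x y) /\
  (forall x, x \in W -> x \notin S -> exists2 y, y \in S & e x y).

Definition ids (T : finType) (e : rel T) (S : {set T}) : Prop :=
  ids_in e [set: T] S.

(* Main.v *)
Require Import Defs.
From mathcomp Require Import all_boot.

Theorem lemma2 (T : finType) (e : rel T) (v : T) (k : nat) :
  simple_graph e -> claw_free e -> 0 < k ->
  (exists S : {set T}, [/\ ids e S, #|S| <= k & v \in S]) <->
  (exists S : {set T},
      ids_in e (~: closed_nbhd e v) S /\ #|S| <= k - 1).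
Proof.
move=> [sym irr] _ k0; split.
- move=> [S [[_ [ind dom]] Sk vS]].
  exists (S :\ v); split; last first.
    move: Sk; rewrite (cardsD1 v S) vS add1n => Sk.
    by rewrite leq_subRL // addnC addn1.
  split; [|split].
  + apply/subsetP=> x; rewrite !inE => /andP[xv xS].
    by rewrite negb_or xv ind.
  + by move=> x y; rewrite !inE => /andP[_ xS] /andP[_ yS]; apply: ind.
  + move=> x; rewrite !inE negb_or => /andP[xv evx].
    rewrite xv /= => xS.
    have [y yS exy] := dom x (in_setT x) xS.
    exists y => //; rewrite !inE yS andbT.
    apply/eqP=> yv; move: evx; by rewrite sym -yv exy.
- move=> [S [[sub [ind dom]] Sk]].
  have vS : v \notin S.
    apply/negP=> /(subsetP sub); by rewrite !inE eqxx.
  have nvS : forall y, y \in S -> ~~ e v y.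
    move=> y /(subsetP sub); rewrite !inE negb_or; by case/andP.
  exists (v |: S); split; last by rewrite setU11.
    2: by rewrite cardsU1 vS; move: Sk k0; case: k => // n; rewrite subn1.
  split; [by apply/subsetP=> x; rewrite inE|split].
  + move=> x y; rewrite !inE => /orP[/eqP->|xS] /orP[/eqP->|yS].
    * by rewrite irr.
    * exact: nvS.
    * by rewrite sym nvS.
    * exact: ind.
  + move=> x _; rewrite !inE negb_or => /andP[xv xS].
    case evx: (e v x).
      by exists v; rewrite ?inE ?eqxx // sym.
    have xW : x \in ~: closed_nbhd e v by rewrite !inE negb_or xv evx.
    have [y yS exy] := dom x xW xS.
    by exists y; rewrite // inE yS orbT.
Qed.
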